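(* Let $A_1,A_2$ be bounded operators on a Hilbert space and $n\ge0$ such that $\omega(A_1+A_2z)\le n$ for all $z\in\mathbb T$. Then $\omega(A_1+zA_2^* )\le n$ and $\omega(A_1^*+A_2z)\le n$ for all $z\in\mathbb T$.
   Context: $\omega(A)=\sup\{|\langle Ax,x\rangle|:\|x\|=1\}$ denotes the numerical radius; $\mathbb T$ is the unit circle. *)

(* Defs.v *)
From HB Require Import structures.
From mathcomp Require Import all_boot all_order all_algebra.
From mathcomp Require Import boolp classical_sets reals.
From mathcomp Require Import complex.
Set Implicit Arguments. Unset Strict Implicit. Unset Printing Implicit Defensive.
Import Order.TTheory GRing.Theory Num.Theory.
Local Open Scope ring_scope.
Local Open Scope complex_scope.

Section Hilbert.
Variables (R : realType) (V : lmodType R[i]).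

Definition inner_product (ip : V -> V -> R[i]) : Prop :=
  [/\ (forall (a : R[i]) (x y z : V), ip (a *: x + y) z = a * ip x z + ip y z),
      (forall x y : V, ip x y = (ip y x)^*),
      (forall x : V, 0 <= ip x x)
    & (forall x : V, ip x x = 0 -> x = 0)].

Definition ipnorm (ip : V -> V -> R[i]) (x : V) : R :=
  Num.sqrt (complex.Re (ip x x)).

Definition ip_complete (ip : V -> V -> R[i]) : Prop :=
  forall u : nat -> V,
    (forall e : R, 0 < e -> exists N : nat, forall m n : nat,
        (N <= m)%N -> (N <= n)%N -> ipnorm ip (u m - u n) < e) ->
    exists l : V, forall e : R, 0 < e -> exists N : nat, forall n : nat,
        (N <= n)%N -> ipnorm ip (u n - l) < e.

Definition hilbert_space (ip : V -> V -> R[i]) : Prop :=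
  inner_product ip /\ ip_complete ip.

Definition bounded_op (ip : V -> V -> R[i]) (A : V -> V) : Prop :=
  linear A /\ exists M : R, forall x : V, ipnorm ip (A x) <= M * ipnorm ip x.

Definition is_adjoint (ip : V -> V -> R[i]) (A B : V -> V) : Prop :=
  forall x y : V, ip (A x) y = ip x (B y).

Definition numrad (ip : V -> V -> R[i]) (A : V -> V) : R :=
  sup [set r : R | exists x : V, ipnorm ip x = 1 /\ r = complex.Re `|ip (A x) x|].

End Hilbert.

(* Main.v *)
Require Import Defs.
From HB Require Import structures.
From mathcomp Require Import all_boot all_order all_algebra.
From mathcomp Require Import boolp classical_sets reals.
From mathcomp Require Import complex.
From mathcomp Require Import lra ring.
Import Order.TTheory GRing.Theory Num.Theory.
Local Open Scope ring_scope.
Local Open Scope complex_scope.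
Set Implicit Arguments. Unset Strict Implicit.

Section Aux.
Variables (R : realType) (V : lmodType R[i]) (ip : V -> V -> R[i]).
Hypothesis Hip : inner_product ip.

Lemma ipDl x y z : ip (x + y) z = ip x z + ip y z.
Proof. case: Hip => H _ _ _; by rewrite -[x]scale1r H mul1r scale1r. Qed.

Lemma ip0l z : ip 0 z = 0.
Proof.
by apply/(addrI (ip 0 z)); rewrite -ipDl !addr0.
Qed.

Lemma ipZl a x z : ip (a *: x) z = a * ip x z.
Proof. case: Hip => H _ _ _; by rewrite -[a *: x]addr0 H ip0l addr0. Qed.

Lemma ipBl x y z : ip (x - y) z = ip x z - ip y z.
Proof. by rewrite ipDl -scaleN1r ipZl mulN1r. Qed.

Lemma ipC x y : ip x y = (ip y x)^*.
Proof. by case: Hip => _ H _ _. Qed.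

Lemma ipDr x y z : ip x (y + z) = ip x y + ip x z.
Proof. by rewrite ipC ipDl rmorphD /= -!ipC. Qed.

Lemma ipZr a x y : ip x (a *: y) = a^* * ip x y.
Proof. by rewrite ipC ipZl rmorphM /= -ipC. Qed.

Lemma ipBr x y z : ip x (y - z) = ip x y - ip x z.
Proof. by rewrite -scaleN1r ipDr ipZr rmorphN1 mulN1r. Qed.

Lemma normC_re (z : R[i]) : `|z| = (complex.Re (`|z| : R[i]))%:C.
Proof. by rewrite normc_def. Qed.

Lemma ge0_re (c : R[i]) : 0 <= c -> c = (complex.Re c)%:C.
Proof.
move=> H; rewrite [LHS]complexE (ger0_Im H) mulr0 addr0 //.
Qed.

Lemma unit_ip x : ipnorm ip x = 1 -> ip x x = 1.
Proof.
rewrite /ipnorm => H.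
case: Hip => _ _ Hp _.
have H0 := Hp x.
have Hr : 0 <= complex.Re (ip x x) by move: H0; rewrite lecE => /andP[_].
rewrite (ge0_re H0); congr (_%:C).
by rewrite -(sqr_sqrtr Hr) H expr1n.
Qed.

Lemma CS u y : ip y y = 1 -> `|ip u y| ^+ 2 <= ip u u.
Proof.
move=> Hy; set l := ip u y.
case: Hip => _ _ Hp _.
have := Hp (u - l *: y).
rewrite !ipBl !ipBr !ipZl !ipZr Hy -/l.
rewrite [ip y u]ipC -/l.
rewrite sqr_normc.
by rewrite mulr1 subrr subr0 [l^* * l]mulrC subr_ge0.
Qed.

Lemma le_Re (x y : R[i]) : x <= y -> complex.Re x <= complex.Re y.
Proof. by rewrite lecE => /andP[]. Qed.

Lemma ReD (x y : R[i]) : complex.Re (x + y) = complex.Re x + complex.Re y.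
Proof. by case: x; case: y. Qed.

Lemma Re_norm_ge0 (z : R[i]) : 0 <= complex.Re (`|z| : R[i]).
Proof. exact: (le_Re (normr_ge0 z)). Qed.

Lemma bnd A : bounded_op ip A ->
  exists K : R, forall y, ip y y = 1 -> complex.Re (`|ip (A y) y| : R[i]) <= K.
Proof.
case=> _ [M HM]; exists (1 + M ^+ 2) => y Hy.
have ny : ipnorm ip y = 1 by rewrite /ipnorm Hy /= sqrtr1.
have HA := HM y; rewrite ny mulr1 in HA.
case: Hip => _ _ Hp _.
have := CS (A y) Hy.
rewrite (normC_re (ip (A y) y)) -rmorphXn (ge0_re (Hp (A y))) lecR => H.
have t0 := Re_norm_ge0 (ip (A y) y).
have E : complex.Re (ip (A y) (A y)) = ipnorm ip (A y) ^+ 2.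
  by rewrite /ipnorm sqr_sqrtr // (le_Re (Hp (A y))).
have N0 : 0 <= ipnorm ip (A y) by rewrite /ipnorm sqrtr_ge0.
rewrite E in H.
move: H t0 N0 HA; set t := complex.Re _; set N := ipnorm _ _ => H t0 N0 HA.
nra.
Qed.

Lemma choose_w (a b : R[i]) : exists w : R[i], `|w| = 1 /\ `|a + w * b| = `|a| + `|b|.
Proof.
have [->|a0] := eqVneq a 0.
  by exists 1; rewrite normr1 mul1r add0r normr0 add0r.
have [->|b0] := eqVneq b 0.
  by exists 1; rewrite normr1 mulr0 addr0 normr0 addr0.
have na0 : `|a| != 0 by rewrite normr_eq0.
have nb0 : `|b| != 0 by rewrite normr_eq0.
exists (a * `|b| / (`|a| * b)); split.
  by rewrite normrM normfV !normrM !normr_id divff // mulf_neq0.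
have -> : a + a * `|b| / (`|a| * b) * b = a * (`|a| + `|b|) / `|a|.
  by field; rewrite na0 b0.
rewrite !normrM normfV normr_id (ger0_norm (addr_ge0 (normr_ge0 _) (normr_ge0 _))).
by rewrite mulrAC divff // mul1r.
Qed.
End Aux.

Theorem lemma4p6 (R : realType) (V : lmodType R[i]) (ip : V -> V -> R[i])
  (A1 A2 A1s A2s : V -> V) (n : R) :
  hilbert_space ip ->
  bounded_op ip A1 -> bounded_op ip A2 ->
  is_adjoint ip A1 A1s -> is_adjoint ip A2 A2s ->
  0 <= n ->
  (forall z : R[i], `|z| = 1 -> numrad ip (fun x => A1 x + z *: A2 x) <= n) ->
  forall z : R[i], `|z| = 1 ->
    numrad ip (fun x => A1 x + z *: A2s x) <= n /\
    numrad ip (fun x => A1s x + z *: A2 x) <= n.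
Proof.
move=> [Hip _] B1 B2 Ad1 Ad2 n0 Hyp z z1.
have [K1 HK1] := bnd Hip B1.
have [K2 HK2] := bnd Hip B2.
have key : forall x, ipnorm ip x = 1 ->
    `|ip (A1 x) x| + `|ip (A2 x) x| <= n%:C.
  move=> x Hx; have Hxx := unit_ip Hip Hx.
  have [w [w1 Hw]] := choose_w (ip (A1 x) x) (ip (A2 x) x).
  rewrite -Hw (normC_re (_ + _)) lecR.
  have Hs := Hyp w w1; rewrite /numrad in Hs.
  apply: le_trans Hs.
  have Eq : forall y, ip (A1 y + w *: A2 y) y = ip (A1 y) y + w * ip (A2 y) y.
    by move=> y; rewrite ipDl // ipZl.
  apply: sup_upper_bound; last by exists x; rewrite Eq.
  split; first by exists (complex.Re (`|ip (A1 x + w *: A2 x) x| : R[i])), x.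
  exists (K1 + K2) => _ [y [Hy ->]].
  have Hyy := unit_ip Hip Hy.
  rewrite Eq; apply: le_trans (lerD (HK1 y Hyy) (HK2 y Hyy)).
  rewrite -ReD; apply: le_Re; apply: le_trans (ler_normD _ _) _.
  by rewrite normrM w1 mul1r.
have fin : forall B : V -> V, (forall x, ipnorm ip x = 1 ->
    `|ip (B x) x| <= `|ip (A1 x) x| + `|ip (A2 x) x|) -> numrad ip B <= n.
  move=> B HB; rewrite /numrad.
  set E := (X in sup X).
  case: (pselect (nonempty E)) => [ne|ne]; last first.
    by rewrite sup_out // => -[].
  apply: ge_sup => // _ [x [Hx ->]].
  have := le_trans (HB x Hx) (key x Hx).
  by rewrite (normC_re (ip (B x) x)) lecR.
split; apply: fin => x Hx.
- rewrite ipDl // ipZl // [ip (A2s x) x]ipC // -Ad2.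
  apply: le_trans (ler_normD _ _) _.
  by rewrite normrM z1 mul1r normcJ.
- rewrite ipDl // ipZl // [ip (A1s x) x]ipC // -Ad1.
  apply: le_trans (ler_normD _ _) _.
  by rewrite normrM z1 mul1r normcJ.
Qed.
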